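(* Let $(\Omega_i,\rho_i)$ be a classical model of the information structure $(\mathcal S_i,E_i)$ for $i=1,2$. Then (1) $(\Omega_1\times\Omega_2,\rho_\times)$ is a classical model of the product $(\mathcal S_1,E_1)\times(\mathcal S_2,E_2)$, where $\rho_\times(\langle X_1,X_2\rangle)=\rho_1(X_1)\times\rho_2(X_2)$; and (2) $(\Omega_1\times\Omega_2,\rho_{\amalg})$ is a classical model of the coproduct $(\mathcal S_1,E_1)\amalg(\mathcal S_2,E_2)$, where $\rho_\amalg(\mathbf 1)=\{\Omega_1\times\Omega_2\}$, $\rho_\amalg(X)=\rho_1(X)\times\{\Omega_2\}$ for $X\in\mathrm{Ob}\,\mathcal S_1\setminus\{\mathbf 1\}$ and $\rho_\amalg(X)=\{\Omega_1\}\times\rho_2(X)$ for $X\in\mathrm{Ob}\,\mathcal S_2\setminus\{\mathbf 1\}$.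
   Context: An information structure is a pair $(\mathcal S,E)$, $\mathcal S$ a small category and $E:\mathcal S\to\mathcal{Sets}$ a functor, such that: $\mathcal S$ has a terminal object $\mathbf 1$; $\mathcal S$ is a poset; its nerve is finite dimensional; if $Z\to X$ and $Z\to Y$ then $X\wedge Y$ exists; $E(\mathbf 1)$ is a singleton; for $\pi:X\to Y$, $X\ne Y$, $E(\pi)$ is surjective with $|E(X)|>|E(Y)|$; for every product diagram $X\xleftarrow{\pi}X\wedge Y\xrightarrow{\sigma}Y$ and $(x,y)$, $|E(\pi)^{-1}(x)\cap E(\sigma)^{-1}(y)|\le1$; every $x\in E(X)$ is the $X$-component of some element of $\lim E$. The product $(\mathcal S_1,E_1)\times(\mathcal S_2,E_2)=(\mathcal S,E)$ has objects the pairs $\langle X_1,X_2\rangle$, an arrow $\langle X_1,X_2\rangle\to\langle Y_1,Y_2\rangle$ iff $X_i\to Y_i$ for $i=1,2$, and $E(\langle X_1,X_2\rangle)=E_1(X_1)\times E_2(X_2)$, $E(\langle\pi_1,\pi_2\rangle)=E_1(\pi_1)\times E_2(\pi_2)$. The coproduct has as poset of objects $\mathrm{Ob}\,\mathcal S_1\sqcup\mathrm{Ob}\,\mathcal S_2$ with the two terminal objects identified (arrows those of $\mathcal S_1$ or of $\mathcal S_2$), and $E(X)=E_i(X)$ for $X\in\mathrm{Ob}\,\mathcal S_i$. For a set $\Omega$, $\mathcal O(\Omega)$ is the category of finite partitions of $\Omega$ with $X\to Y$ iff $X$ refines $Y$; the product $XY$ of partitions is their coarsest common refinement. For families $\mathcal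 A,\mathcal B$ of subsets of $\Omega_1,\Omega_2$, $\mathcal A\times\mathcal B=\{A\times B: A\in\mathcal A, B\in\mathcal B\}$. A classical model of $(\mathcal S,E)$ is $(\Omega,\rho)$ with $\rho:\mathcal S\to\mathcal O(\Omega)$ a functor injective on objects, bijections $E(X)\simeq\rho(X)$ for all $X$, and $\rho(X\wedge Y)=\rho(X)\rho(Y)$ whenever $X\wedge Y$ exists. *)

(* Defs.v *)
From mathcomp Require Import all_boot.
From mathcomp Require Import boolp classical_sets cardinality.
Set Implicit Arguments.
Unset Strict Implicit.
Unset Printing Implicit Defensive.
Local Open Scope classical_set_scope.

(* A poset category given by a boolean order relation [le] (X -> Y iff le X Y),
   with a distinguished object [top], and a functor E into Types.
   Since [le] is boolean, arrows are unique (proof irrelevance of bool). *)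
Record infoStr := InfoStr {
  ob : Type;
  le : ob -> ob -> bool;
  top : ob;
  E : ob -> Type;
  Emap : forall X Y : ob, le X Y -> E X -> E Y }.

Definition is_meet (S : infoStr) (X Y M : ob S) : Prop :=
  le M X /\ le M Y /\ forall Z, le Z X -> le Z Y -> le Z M.

Definition card_lt (A B : Type) : Prop :=
  (exists f : A -> B, injective f) /\ ~ (exists g : B -> A, injective g).

(* Limit of E: compatible families. *)
Definition is_section (S : infoStr) (s : forall X : ob S, E X) : Prop :=
  forall X Y (h : le X Y), Emap h (s X) = s Y.

Definition is_info_structure (S : infoStr) : Prop :=
  (forall X : ob S, le X X) /\
  (forall X Y Z : ob S, le X Y -> le Y Z -> le X Z) /\
  (forall X Y : ob S, le X Y -> le Y X -> X = Y) /\
  (forall (X : ob S) (h : le X X) (x : E X), Emap h x = x) /\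
  (forall X Y Z : ob S, forall (h1 : le X Y) (h2 : le Y Z) (h3 : le X Z) (x : E X),
      Emap h3 x = Emap h2 (Emap h1 x)) /\
  (forall X : ob S, le X (top S)) /\
  (* finite dimensional nerve: no strict chain with more than n arrows *)
  (exists n : nat, forall c : nat -> ob S,
      ~ (forall i, i < n.+1 -> le (c i.+1) (c i) /\ c i.+1 <> c i)) /\
  (forall X Y Z : ob S, le Z X -> le Z Y -> exists M, is_meet X Y M) /\
  (exists e : E (top S), forall e', e' = e) /\
  (forall (X Y : ob S) (h : le X Y), X <> Y ->
      (forall y : E Y, exists x : E X, Emap h x = y) /\ card_lt (E Y) (E X)) /\
  (* product diagrams: at most one element over each pair *)
  (forall (X Y M : ob S) (hX : le M X) (hY : le M Y), is_meet X Y M ->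
      forall (x : E X) (y : E Y) (m m' : E M),
        Emap hX m = x -> Emap hY m = y -> Emap hX m' = x -> Emap hY m' = y ->
        m = m') /\
  (forall (X : ob S) (x : E X), exists s : forall Z : ob S, E Z, is_section s /\ s X = x).

Definition prodIS (S1 S2 : infoStr) : infoStr :=
  @InfoStr (ob S1 * ob S2)
    (fun a b => le a.1 b.1 && le a.2 b.2)
    (top S1, top S2)
    (fun a => (E a.1 * E a.2)%type)
    (fun a b h e =>
       (Emap (proj1 (andb_prop _ _ h)) e.1, Emap (proj2 (andb_prop _ _ h)) e.2)).

(* Objects: the common terminal object [None], the non-terminal objects of S1
   ([inl]) and the non-terminal objects of S2 ([inr]). *)
Definition cob (S1 S2 : infoStr) : Type :=
  option ({X : ob S1 | X <> top S1} + {Y : ob S2 | Y <> top S2}).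

Definition cle (S1 S2 : infoStr) (a b : cob S1 S2) : bool :=
  match a, b with
  | _, None => true
  | Some (inl x), Some (inl x') => le (proj1_sig x) (proj1_sig x')
  | Some (inr y), Some (inr y') => le (proj1_sig y) (proj1_sig y')
  | _, _ => false
  end.

(* E on the coproduct; E(1) is E1(1) (a singleton, identified with E2(1)). *)
Definition cE (S1 S2 : infoStr) (a : cob S1 S2) : Type :=
  match a with
  | None => E (top S1)
  | Some (inl x) => E (proj1_sig x)
  | Some (inr y) => E (proj1_sig y)
  end.

Definition cEmap (S1 S2 : infoStr) (h1 : forall X : ob S1, le X (top S1))
  (to1 : forall Y : ob S2, E Y -> E (top S1)) :
  forall a b : cob S1 S2, cle a b -> cE a -> cE b :=
  fun a b =>
  match a as a0, b as b0 return cle a0 b0 -> cE a0 -> cE b0 with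
  | None, None => fun _ e => e
  | Some (inl x), None => fun _ e => Emap (h1 (proj1_sig x)) e
  | Some (inr y), None => fun _ e => to1 (proj1_sig y) e
  | Some (inl x), Some (inl x') => fun h e => Emap h e
  | Some (inr y), Some (inr y') => fun h e => Emap h e
  | None, Some (inl _) => fun h _ => False_rect _ (ltac:(discriminate h))
  | None, Some (inr _) => fun h _ => False_rect _ (ltac:(discriminate h))
  | Some (inl _), Some (inr _) => fun h _ => False_rect _ (ltac:(discriminate h))
  | Some (inr _), Some (inl _) => fun h _ => False_rect _ (ltac:(discriminate h))
  end.

(* Its definition needs the arrows X -> 1 of S1 and
   (the unique) maps E2(Y) -> E1(1) into the singleton E1(1); these are supplied
   as data (they exist and are unique for information structures). *)
Definition coprodIS (S1 S2 : infoStr) (h1 : forall X : ob S1, le X (top S1))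
  (to1 : forall Y : ob S2, E Y -> E (top S1)) : infoStr :=
  @InfoStr (cob S1 S2) (@cle S1 S2) None (@cE S1 S2) (cEmap h1 to1).

Definition is_fpartition (Omega : Type) (P : set (set Omega)) : Prop :=
  finite_set P /\
  (forall A, P A -> A <> set0) /\
  (forall A B, P A -> P B -> A `&` B <> set0 -> A = B) /\
  (forall w : Omega, exists A, P A /\ A w).

Definition refines (Omega : Type) (P Q : set (set Omega)) : Prop :=
  forall A, P A -> exists B, Q B /\ A `<=` B.

Definition pprod (Omega : Type) (P Q : set (set Omega)) : set (set Omega) :=
  [set C | exists A B, P A /\ Q B /\ C = A `&` B /\ C <> set0].

Definition famX (O1 O2 : Type) (A : set (set O1)) (B : set (set O2))
  : set (set (O1 * O2)) :=
  [set C | exists a b, A a /\ B b /\ C = a `*` b].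

Definition classical_model (S : infoStr) (Omega : Type)
  (rho : ob S -> set (set Omega)) : Prop :=
  (forall X, is_fpartition (rho X)) /\
  (forall X Y, le X Y -> refines (rho X) (rho Y)) /\
  injective rho /\
  (forall X, exists f : E X -> set Omega,
      injective f /\ (forall x, rho X (f x)) /\
      (forall A, rho X A -> exists x, f x = A)) /\
  (forall X Y M, is_meet X Y M -> rho M = pprod (rho X) (rho Y)).

Definition rho_prod (S1 S2 : infoStr) (O1 O2 : Type)
  (rho1 : ob S1 -> set (set O1)) (rho2 : ob S2 -> set (set O2))
  : ob (prodIS S1 S2) -> set (set (O1 * O2)) :=
  fun a => famX (rho1 a.1) (rho2 a.2).

Definition rho_coprod (S1 S2 : infoStr) (O1 O2 : Type)
  (rho1 : ob S1 -> set (set O1)) (rho2 : ob S2 -> set (set O2))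
  : cob S1 S2 -> set (set (O1 * O2)) :=
  fun a => match a with
  | None => [set setT]
  | Some (inl x) => famX (rho1 (proj1_sig x)) [set setT]
  | Some (inr y) => famX [set setT] (rho2 (proj1_sig y))
  end.

(* Main.v *)
Require Import Defs.
From mathcomp Require Import all_boot.
From mathcomp Require Import boolp classical_sets cardinality.

Set Implicit Arguments. Unset Strict Implicit. Unset Printing Implicit Defensive.
Local Open Scope classical_set_scope.

Lemma neq0P T (A : set T) : A <> set0 <-> exists x, A x.
Proof.
split.
- move=> H; apply: contrapT => N; apply: H; apply/seteqP; split=> x //= Ax.
  by apply: N; exists x.
- by move=> [x Ax] E; rewrite E in Ax.
Qed.

Lemma setX_inj T1 T2 (a a' : set T1) (b b' : set T2) :
  a <> set0 -> b <> set0 -> a `*` b = a' `*` b' -> a = a' /\ b = b'.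
Proof.
move=> /neq0P [u au] /neq0P [v bv] E.
have h : forall x y, a x /\ b y <-> a' x /\ b' y.
  by move=> x y; have := congr1 (fun S => S (x, y)) E => /= ->.
split; apply/seteqP; split => x Hx.
- by case: (proj1 (h x v) (conj Hx bv)).
- have [A' B'] : a' u /\ b' v by apply/h.
  by case: (proj2 (h x v) (conj Hx B')).
- by case: (proj1 (h u x) (conj au Hx)).
- have [A' B'] : a' u /\ b' v by apply/h.
  by case: (proj2 (h u x) (conj A' Hx)).
Qed.

Lemma fpart_ne Omega (P : set (set Omega)) (w : Omega) : is_fpartition P -> exists A, P A.
Proof. by move=> [_ [_ [_ c]]]; case: (c w) => A [PA _]; exists A. Qed.

Lemma famX_sub1 O1 O2 (A A' : set (set O1)) (B B' : set (set O2)) :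
  (forall a, A a -> a <> set0) -> (forall b, B b -> b <> set0) ->
  (exists b, B b) -> famX A B `<=` famX A' B' -> A `<=` A'.
Proof.
move=> nA nB [b Bb] S a Aa.
have [a' [b' [A'a' [B'b' E]]]] := S (a `*` b) (ex_intro _ a (ex_intro _ b (conj Aa (conj Bb erefl)))).
by have [-> _] := setX_inj (nA _ Aa) (nB _ Bb) E.
Qed.

Lemma famX_sub2 O1 O2 (A A' : set (set O1)) (B B' : set (set O2)) :
  (forall a, A a -> a <> set0) -> (forall b, B b -> b <> set0) ->
  (exists a, A a) -> famX A B `<=` famX A' B' -> B `<=` B'.
Proof.
move=> nA nB [a Aa] S b Bb.
have [a' [b' [A'a' [B'b' E]]]] := S (a `*` b) (ex_intro _ a (ex_intro _ b (conj Aa (conj Bb erefl)))).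
by have [_ ->] := setX_inj (nA _ Aa) (nB _ Bb) E.
Qed.

Lemma famX_fpart O1 O2 (A : set (set O1)) (B : set (set O2)) :
  is_fpartition A -> is_fpartition B -> is_fpartition (famX A B).
Proof.
move=> [fA [nA [dA cA]]] [fB [nB [dB cB]]]; split; [|split; [|split]].
- have -> : famX A B = (fun p => p.1 `*` p.2) @` (A `*` B).
    apply/seteqP; split => C.
    + by move=> [a [b [Aa [Bb ->]]]]; exists (a, b).
    + by move=> [[a b] [Aa Bb] <-]; exists a, b.
  by apply: finite_image; apply: finite_setX.
- move=> C [a [b [Aa [Bb ->]]]]; apply/neq0P.
  have [u au] := proj1 (neq0P a) (nA _ Aa).
  have [v bv] := proj1 (neq0P b) (nB _ Bb).
  by exists (u, v).
- move=> C D [a [b [Aa [Bb ->]]]] [a' [b' [Aa' [Bb' ->]]]] /neq0P [[u v] [[/= au bv] [/= au' bv']]].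
  have -> : a = a' by apply: dA => //; apply/neq0P; exists u.
  have -> : b = b' by apply: dB => //; apply/neq0P; exists v.
  by [].
- move=> [u v]; have [a [Aa au]] := cA u; have [b [Bb bv]] := cB v.
  by exists (a `*` b); split => //; exists a, b.
Qed.

Lemma fpartT Omega (w : Omega) : is_fpartition [set (setT : set Omega)].
Proof.
split; [exact: finite_set1|split; [|split]].
- by move=> A -> E; have : (setT : set Omega) w by []; rewrite E => x.
- by move=> A B -> ->.
- by move=> u; exists setT.
Qed.

Lemma famX_ref O1 O2 (A A' : set (set O1)) (B B' : set (set O2)) :
  refines A A' -> refines B B' -> refines (famX A B) (famX A' B').
Proof.
move=> rA rB C [a [b [Aa [Bb ->]]]].
have [a' [A'a' sa]] := rA a Aa; have [b' [B'b' sb]] := rB b Bb.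
exists (a' `*` b'); split; first by exists a', b'.
by move=> [u v] [/= ? ?]; split; [apply: sa|apply: sb].
Qed.

Lemma refT Omega (P : set (set Omega)) : refines P [set setT].
Proof. by move=> A _; exists setT; split. Qed.

Lemma famX_pprod O1 O2 (A A' : set (set O1)) (B B' : set (set O2)) :
  famX (pprod A A') (pprod B B') = pprod (famX A B) (famX A' B').
Proof.
apply/seteqP; split => C.
- move=> [c [d [[a [a' [Aa [Aa' [-> n1]]]]] [[b [b' [Bb [Bb' [-> n2]]]]] ->]]]].
  exists (a `*` b), (a' `*` b'); split; first by exists a, b.
  split; first by exists a', b'.
  split; first by rewrite setXI.
  move: n1 n2 => /neq0P [u ?] /neq0P [v ?]; apply/neq0P; by exists (u, v).
- move=> [ab [ab' [[a [b [Aa [Bb ->]]]] [[a' [b' [Aa' [Bb' ->]]]] [-> n]]]]].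
  move: n => /neq0P [[u v] [[/= ? ?] [/= ? ?]]].
  exists (a `&` a'), (b `&` b'); split.
    exists a, a'; do 3 split => //; apply/neq0P; by exists u.
  split; last by rewrite setXI.
  exists b, b'; do 3 split => //; apply/neq0P; by exists v.
Qed.

Lemma pprodC Omega (P Q : set (set Omega)) : pprod P Q = pprod Q P.
Proof.
by apply/seteqP; split => C [a [b [Pa [Qb [-> n]]]]]; exists b, a; rewrite setIC; do 3 split => //; rewrite setIC.
Qed.

Lemma pprodT Omega (P : set (set Omega)) :
  (forall A, P A -> A <> set0) -> pprod [set setT] P = P.
Proof.
move=> nP; apply/seteqP; split => C.
- by move=> [a [b [-> [Pb [-> _]]]]]; rewrite setTI.
- by move=> PC; exists setT, C; rewrite setTI; do 3 split => //; apply: nP.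
Qed.

Lemma famX_eq O1 O2 (A A' : set (set O1)) (B B' : set (set O2)) :
  (forall a, A a -> a <> set0) -> (forall b, B b -> b <> set0) ->
  (forall a, A' a -> a <> set0) -> (forall b, B' b -> b <> set0) ->
  (exists a, A a) -> (exists b, B b) -> (exists a, A' a) -> (exists b, B' b) ->
  famX A B = famX A' B' -> A = A' /\ B = B'.
Proof.
move=> nA nB nA' nB' eA eB eA' eB' E; split; apply/seteqP; split.
- by apply: (famX_sub1 (A' := A') (B' := B') nA nB eB); rewrite E.
- by apply: (famX_sub1 (A' := A) (B' := B) nA' nB' eB'); rewrite E.
- by apply: (famX_sub2 (A' := A') (B' := B') nA nB eA); rewrite E.
- by apply: (famX_sub2 (A' := A) (B' := B) nA' nB' eA'); rewrite E.
Qed.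

Lemma famXTT O1 O2 : famX [set (setT : set O1)] [set (setT : set O2)] = [set setT].
Proof.
apply/seteqP; split => C.
- by move=> [a [b [-> [-> ->]]]]; rewrite setXTT.
- by move=> ->; exists setT, setT; rewrite setXTT.
Qed.

Lemma rho_top (S : infoStr) Omega (rho : ob S -> set (set Omega)) :
  is_info_structure S -> classical_model rho ->
  rho (top S) = [set setT] /\ exists w : Omega, True.
Proof.
move=> [_ [_ [_ [_ [_ [_ [_ [_ [[e He] _]]]]]]]]] [P [_ [_ [B _]]]].
have [f [fi [fm fs]]] := B (top S).
have [_ [nP [_ cP]]] := P (top S).
have [w fw] := proj1 (neq0P _) (nP _ (fm e)).
have allf : forall A, rho (top S) A -> A = f e.
  by move=> A /fs [x <-]; rewrite (He x).
have feT : f e = setT.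
  apply/seteqP; split => // u _; have [A [RA Au]] := cP u; by rewrite -(allf _ RA).
split; last by exists w.
apply/seteqP; split => A.
- by move=> /allf ->; rewrite feT.
- by move=> ->; rewrite -feT.
Qed.

Lemma nsetT Omega (w : Omega) : (setT : set Omega) <> set0.
Proof. by move=> E; have : (setT : set Omega) w by []; rewrite E. Qed.

Unset Implicit Arguments.
Set Strict Implicit.

Theorem proposition2p15 (S1 S2 : infoStr) (O1 O2 : Type)
  (rho1 : ob S1 -> set (set O1)) (rho2 : ob S2 -> set (set O2))
  (h1 : forall X : ob S1, le X (top S1))
  (to1 : forall Y : ob S2, E Y -> E (top S1)) :
  is_info_structure S1 -> is_info_structure S2 ->
  classical_model rho1 -> classical_model rho2 ->
  classical_model (rho_prod rho1 rho2) /\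
  classical_model (S := coprodIS h1 to1) (rho_coprod rho1 rho2).
Proof.
move=> IS1 IS2 CM1 CM2.
have [T1 [w1 _]] := rho_top IS1 CM1.
have [T2 [w2 _]] := rho_top IS2 CM2.
move: (IS1) (IS2) (CM1) (CM2) => [refl1 [_ [anti1 _]]] [refl2 [_ [anti2 _]]]
  [P1 [R1 [I1 [B1 M1]]]] [P2 [R2 [I2 [B2 M2]]]].
have n1 : forall X a, rho1 X a -> a <> set0 by move=> X; case: (P1 X) => _ [].
have n2 : forall X a, rho2 X a -> a <> set0 by move=> X; case: (P2 X) => _ [].
have e1 : forall X, exists a, rho1 X a by move=> X; exact: fpart_ne w1 (P1 X).
have e2 : forall X, exists a, rho2 X a by move=> X; exact: fpart_ne w2 (P2 X).
have nT1 := nsetT w1; have nT2 := nsetT w2.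
have nT1' : forall a, [set (setT : set O1)] a -> a <> set0 by move=> a ->.
have nT2' : forall a, [set (setT : set O2)] a -> a <> set0 by move=> a ->.
have eT1 : exists a, [set (setT : set O1)] a by exists setT.
have eT2 : exists a, [set (setT : set O2)] a by exists setT.
split.
- split; [|split; [|split; [|split]]].
  + by move=> X; apply: famX_fpart.
  + by move=> X Y /andP [hx hy]; apply: famX_ref; [apply: R1|apply: R2].
  + move=> [x1 x2] [y1 y2] /= E.
    have [E1 E2] := famX_eq (n1 x1) (n2 x2) (n1 y1) (n2 y2) (e1 _) (e2 _) (e1 _) (e2 _) E.
    by rewrite (I1 _ _ E1) (I2 _ _ E2).
  + move=> [x1 x2].
    have [f [fi [fm fs]]] := B1 x1; have [g [gi [gm gs]]] := B2 x2.
    exists (fun e => f e.1 `*` g e.2); split; [|split].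
    * move=> [a b] [a' b'] /= E.
      have [Ea Eb] := setX_inj (n1 _ _ (fm a)) (n2 _ _ (gm b)) E.
      by rewrite (fi _ _ Ea) (gi _ _ Eb).
    * by move=> [a b]; exists (f a), (g b).
    * move=> C [a [b [Aa [Bb ->]]]].
      have [x fx] := fs _ Aa; have [y gy] := gs _ Bb.
      by exists (x, y); rewrite /= fx gy.
  + move=> [x1 x2] [y1 y2] [m1 m2] [/andP [a1 a2] [/andP [b1 b2] H]].
    have H1 : is_meet x1 y1 m1.
      split => //; split => // Z hx hy.
      by have /andP [] := H (Z, m2) (introT andP (conj hx a2)) (introT andP (conj hy b2)).
    have H2 : is_meet x2 y2 m2.
      split => //; split => // Z hx hy.
      by have /andP [] := H (m1, Z) (introT andP (conj a1 hx)) (introT andP (conj b1 hy)).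
    by rewrite /rho_prod /= (M1 _ _ _ H1) (M2 _ _ _ H2) famX_pprod.
- have TT1 : pprod [set (setT : set O1)] [set setT] = [set setT] by apply: pprodT.
  have TT2 : pprod [set (setT : set O2)] [set setT] = [set setT] by apply: pprodT.
  have ntop1 : forall x : ob S1, x <> top S1 -> rho1 x <> [set setT].
    by move=> x nx E; apply: nx; apply: I1; rewrite E T1.
  have ntop2 : forall x : ob S2, x <> top S2 -> rho2 x <> [set setT].
    by move=> x nx E; apply: nx; apply: I2; rewrite E T2.
  have nC : forall X a, rho_coprod rho1 rho2 X a -> a <> set0.
    case => [[[x nx]|[y ny]]|] a /=.
    * by move=> [b [c [hb [-> ->]]]]; apply/neq0P;
        have [u ?] := proj1 (neq0P _) (n1 _ _ hb); exists (u, w2).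
    * by move=> [b [c [-> [hc ->]]]]; apply/neq0P;
        have [u ?] := proj1 (neq0P _) (n2 _ _ hc); exists (w1, u).
    * by move=> ->; apply: nsetT (w1, w2).
  have canti : forall a b : cob S1 S2, cle a b -> cle b a -> a = b.
    case => [[[x nx]|[y ny]]|] [[[x' nx']|[y' ny']]|] //= h h'.
    * have E := anti1 _ _ h h'; subst x'; by rewrite (Prop_irrelevance nx nx').
    * have E := anti2 _ _ h h'; subst y'; by rewrite (Prop_irrelevance ny ny').
  have crefl : forall a : cob S1 S2, cle a a.
    by case => [[[x nx]|[y ny]]|] //=.
  split; [|split; [|split; [|split]]].
  + case => [[[x nx]|[y ny]]|] /=.
    * by apply: famX_fpart => //; apply: fpartT w2.
    * by apply: famX_fpart => //; apply: fpartT w1.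
    * exact: fpartT (w1, w2).
  + case => [[[x nx]|[y ny]]|] [[[x' nx']|[y' ny']]|] //= h; try exact: refT.
    * by apply: famX_ref; [apply: R1|apply: refT].
    * by apply: famX_ref; [apply: refT|apply: R2].
  + have fT : [set (setT : set (O1 * O2))] = famX [set setT] [set setT] by rewrite famXTT.
    case => [[[x nx]|[y ny]]|] [[[x' nx']|[y' ny']]|] //= E.
    * have [E1 _] := famX_eq (n1 _) nT2' (n1 _) nT2' (e1 _) eT2 (e1 _) eT2 E.
      have E' := I1 _ _ E1; subst x'; by rewrite (Prop_irrelevance nx nx').
    * have [E1 _] := famX_eq (n1 _) nT2' nT1' (n2 _) (e1 _) eT2 eT1 (e2 _) E.
      by case: (ntop1 _ nx).
    * rewrite fT in E.
      have [E1 _] := famX_eq (n1 _) nT2' nT1' nT2' (e1 _) eT2 eT1 eT2 E.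
      by case: (ntop1 _ nx).
    * have [_ E1] := famX_eq nT1' (n2 _) (n1 _) nT2' eT1 (e2 _) (e1 _) eT2 E.
      by case: (ntop2 _ ny).
    * have [_ E1] := famX_eq nT1' (n2 _) nT1' (n2 _) eT1 (e2 _) eT1 (e2 _) E.
      have E' := I2 _ _ E1; subst y'; by rewrite (Prop_irrelevance ny ny').
    * rewrite fT in E.
      have [_ E1] := famX_eq nT1' (n2 _) nT1' nT2' eT1 (e2 _) eT1 eT2 E.
      by case: (ntop2 _ ny).
    * rewrite fT in E.
      have [E1 _] := famX_eq nT1' nT2' (n1 _) nT2' eT1 eT2 (e1 _) eT2 E.
      by case: (ntop1 _ nx'); rewrite -E1.
    * rewrite fT in E.
      have [_ E1] := famX_eq nT1' nT2' nT1' (n2 _) eT1 eT2 eT1 (e2 _) E.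
      by case: (ntop2 _ ny'); rewrite -E1.
  + case => [[[x nx]|[y ny]]|] /=.
    * have [f [fi [fm fs]]] := B1 x.
      exists (fun e => f e `*` setT); split; [|split].
      - move=> a a' /= E.
        have [Ea _] := setX_inj (n1 _ _ (fm a)) nT2 E.
        exact: fi.
      - by move=> a; exists (f a), setT.
      - move=> C [a [b [Aa [-> ->]]]].
        by have [x0 fx] := fs _ Aa; exists x0; rewrite fx.
    * have [f [fi [fm fs]]] := B2 y.
      exists (fun e => setT `*` f e); split; [|split].
      - move=> a a' /= E.
        have [_ Ea] := setX_inj nT1 (n2 _ _ (fm a)) E.
        exact: fi.
      - by move=> a; exists setT, (f a).
      - move=> C [a [b [-> [Bb ->]]]].
        by have [x0 fx] := fs _ Bb; exists x0; rewrite fx.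
    * move: IS1 => [_ [_ [_ [_ [_ [_ [_ [_ [[e He] _]]]]]]]]].
      exists (fun _ => setT); split; [|split].
      - by move=> a b _; rewrite (He a) (He b).
      - by [].
      - by move=> A ->; exists e.
  + move=> X Y M [hX [hY H]].
    have XN : forall Y M, is_meet (S := coprodIS h1 to1) None Y M ->
        rho_coprod rho1 rho2 M = pprod (rho_coprod rho1 rho2 None) (rho_coprod rho1 rho2 Y).
      move=> Y0 M0 [_ [hY0 H0]].
      have E : M0 = Y0.
        apply: canti => //; apply: (H0); [by case: (Y0) => [[]|] | exact: crefl].
      by rewrite E /= pprodT //; apply: nC.
    case: X hX H => [[[x nx]|[y ny]]|] hX H; last first.
      exact: (XN Y M (conj hX (conj hY H))).
    all: case: Y hY H => [[[x' nx']|[y' ny']]|] hY H; last first.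
    1,4: rewrite pprodC; apply: (XN _ M); split => //; split => // Z ? ?; exact: H.
    all: case: M hX hY H => [[[m nm]|[m nm]]|] //= hX hY H.
    all: cycle 1.
    * have Hm : is_meet x x' m.
        split => //; split => // Z hz hz'.
        have [ZT|nZ] := pselect (Z = top S1).
          subst Z; exfalso; apply: (nx); apply: anti1 => //; exact: h1.
        exact: (H (Some (inl (exist _ Z nZ)))).
      by rewrite (M1 _ _ _ Hm) -TT2 famX_pprod TT2.
    * have Hm : is_meet y y' m.
        split => //; split => // Z hz hz'.
        have [ZT|nZ] := pselect (Z = top S2).
          subst Z; exfalso; apply: (ny); apply: anti2 => //.
          by move: IS2 => [_ [_ [_ [_ [_ [t2 _]]]]]]; apply: t2.
        exact: (H (Some (inr (exist _ Z nZ)))).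
      by rewrite (M2 _ _ _ Hm) -TT1 famX_pprod TT1.
Qed.
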